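(* The following five $8$-dimensional complex Lie algebras are mutually non-isomorphic. Each has basis $\mathbf x_1,\dots,\mathbf x_6,\mathbf y_1,\mathbf y_2$, with the listed nonzero brackets (together with those obtained by antisymmetry) and all other brackets of basis elements equal to zero: (1) $N^{8,2}_1$: $[\mathbf x_1,\mathbf x_2]=\mathbf y_1$, $[\mathbf x_3,\mathbf x_4]=\mathbf y_2$, $[\mathbf x_5,\mathbf x_6]=\mathbf y_1+\mathbf y_2$; (2) $N^{8,2}_2$: $[\mathbf x_5,\mathbf x_2]=[\mathbf x_6,\mathbf x_1]=\mathbf y_1$, $[\mathbf x_5,\mathbf x_3]=[\mathbf x_6,\mathbf x_4]=\mathbf y_2$; (3) $N^{8,2}_3$: $[\mathbf x_1,\mathbf x_2]=[\mathbf x_6,\mathbf x_5]=\mathbf y_1$, $[\mathbf x_3,\mathbf x_6]=[\mathbf x_5,\mathbf x_4]=\mathbf y_2$; (4) $N^{8,2}_4$: $[\mathbf x_1,\mathbf x_2]=[\mathbf x_3,\mathbf x_6]=[\mathbf x_5,\mathbf x_4]=\mathbf y_1$, $[\mathbf x_6,\mathbf x_5]=\mathbf y_2$; (5) $N^{8,2}_5$: $[\mathbf x_1,\mathbf x_6]=[\mathbf x_3,\mathbf x_4]=[\mathbf x_5,\mathbf x_2]=\mathbf y_1$, $[\mathbf x_6,\mathbf x_3]=[\mathbf x_4,\mathbf x_5]=\mathbf y_2$. *)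

(* Defs.v *)
(* Complex numbers: C := R[i] = complex R for R : realType
   (mathcomp-real-closed's complex numbers over the reals). *)
From HB Require Import structures.
From mathcomp Require Import all_boot all_order all_algebra.
From mathcomp Require Import reals complex.
Set Implicit Arguments. Unset Strict Implicit. Unset Printing Implicit Defensive.
Import Order.TTheory GRing.Theory Num.Theory.
Local Open Scope ring_scope.

Section LieSC.
Variable F : fieldType.
Variable n : nat.

(* structure constants: [e_i, e_j] = c i j, for the standard basis e_i of F^n
   (vectors are coordinate rows 'rV[F]_n) *)
Definition structure_constants := 'I_n -> 'I_n -> 'rV[F]_n.

Definition lie_br (c : structure_constants) (u v : 'rV[F]_n) : 'rV[F]_n :=
  \sum_(i < n) \sum_(j < n) (u 0 i * v 0 j) *: c i j.

Definition lie_isomorphic (c1 c2 : structure_constants) : Prop :=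
  exists A : 'M[F]_n, A \in unitmx /\
    forall u v : 'rV[F]_n, lie_br c2 (u *m A) (v *m A) = lie_br c1 u v *m A.

Definition bvec (k : nat) : 'rV[F]_n := \row_(j < n) ((j : nat) == k)%:R.

(* structure constants from a list of nonzero brackets [e_a, e_b] = w
   (0-based indices), extended by antisymmetry, all others zero *)
Definition sc_of_list (l : seq (nat * nat * 'rV[F]_n)) : structure_constants :=
  fun i j => \sum_(t <- l)
     (((t.1.1 == i) && (t.1.2 == j))%:R *: t.2
      - ((t.1.1 == j) && (t.1.2 == i))%:R *: t.2).
End LieSC.

(* Basis x_1..x_6, y_1, y_2 of C^8: x_k has index k-1, y_k has index k+5. *)
Definition xi (k : nat) : nat := k.-1.
Definition yv (F : fieldType) (k : nat) : 'rV[F]_8 := bvec F 8 (k + 5).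

Section N82.
Variable F : fieldType.
Local Notation y := (yv F).

Definition N82_1 : structure_constants F 8 := sc_of_list
  [:: (xi 1, xi 2, y 1); (xi 3, xi 4, y 2); (xi 5, xi 6, y 1 + y 2)].
Definition N82_2 : structure_constants F 8 := sc_of_list
  [:: (xi 5, xi 2, y 1); (xi 6, xi 1, y 1); (xi 5, xi 3, y 2); (xi 6, xi 4, y 2)].
Definition N82_3 : structure_constants F 8 := sc_of_list
  [:: (xi 1, xi 2, y 1); (xi 6, xi 5, y 1); (xi 3, xi 6, y 2); (xi 5, xi 4, y 2)].
Definition N82_4 : structure_constants F 8 := sc_of_list
  [:: (xi 1, xi 2, y 1); (xi 3, xi 6, y 1); (xi 5, xi 4, y 1); (xi 6, xi 5, y 2)].
Definition N82_5 : structure_constants F 8 := sc_of_list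
  [:: (xi 1, xi 6, y 1); (xi 3, xi 4, y 1); (xi 5, xi 2, y 1);
      (xi 6, xi 3, y 2); (xi 4, xi 5, y 2)].

Definition N82 (k : nat) : structure_constants F 8 :=
  match k with
  | 1 => N82_1 | 2 => N82_2 | 3 => N82_3 | 4 => N82_4 | _ => N82_5
  end.
End N82.

(* Main.v *)
Require Import Defs.
From HB Require Import structures.
From mathcomp Require Import all_boot all_order all_algebra.
From mathcomp Require Import reals complex.
From mathcomp Require Import ring.
Set Implicit Arguments. Unset Strict Implicit. Unset Printing Implicit Defensive.
Import Order.TTheory GRing.Theory Num.Theory.
Local Open Scope ring_scope.

Section Gen.
Variable F : fieldType.
Variable n : nat.

Lemma sum_delta (a : nat) (G : 'I_n.+1 -> F) : (a < n.+1)%N ->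
  \sum_(i < n.+1) ((a == i)%:R * G i) = G (inord a).
Proof.
move=> ha; rewrite (bigD1 (inord a)) //= inordK // eqxx mul1r big1 ?addr0 //.
move=> i hi; case: (a =P i) => [e|_]; last by rewrite mul0r.
suff : i == inord a by rewrite (negbTE hi).
by apply/eqP/val_inj; rewrite /= e inordK.
Qed.

Definition bnd (l : seq (nat * nat * 'rV[F]_n.+1)) :=
  all (fun t => (t.1.1 < n.+1) && (t.1.2 < n.+1))%N l.

Lemma lie_br_list (l : seq (nat * nat * 'rV[F]_n.+1)) u v : bnd l ->
  lie_br (sc_of_list l) u v = \sum_(t <- l)
   (u 0 (inord t.1.1) * v 0 (inord t.1.2) - u 0 (inord t.1.2) * v 0 (inord t.1.1)) *: t.2.
Proof.
elim: l => [|t l IH] /=.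
  move=> _; rewrite big_nil /lie_br /sc_of_list big1 // => i _.
  by rewrite big1 // => j _; rewrite big_nil scaler0.
case/andP=> /andP [ha hb] hl; rewrite big_cons -IH //.
have E : forall a b, (a < n.+1)%N -> (b < n.+1)%N ->
   \sum_(i < n.+1) \sum_(j < n.+1) u 0 i * v 0 j * ((a == i) && (b == j))%:R
    = u 0 (inord a) * v 0 (inord b).
  move=> a b ha' hb'; rewrite -(sum_delta (fun i => u 0 i) ha') mulr_suml.
  apply: eq_bigr => i _; rewrite -(sum_delta (fun j => v 0 j) hb') mulr_sumr.
  by apply: eq_bigr => j _; rewrite -mulnb natrM; ring.
rewrite /lie_br /sc_of_list -!E //.
rewrite scalerBl !scaler_suml -sumrB -big_split /=; apply: eq_bigr => i _.
rewrite !scaler_suml -sumrB -big_split /=; apply: eq_bigr => j _.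
rewrite big_cons scalerDr; congr (_ + _).
by rewrite scalerBr !scalerA (andbC (t.1.2 == i)).
Qed.
End Gen.
Section Inv.
Variable F : fieldType.
Variable n : nat.
Implicit Types (c : structure_constants F n) (f : 'cV[F]_n) (u v : 'rV[F]_n).

Definition omega c f u v : F := (lie_br c u v *m f) 0 0.
Definition central c u := forall v, lie_br c u v = 0.
Definition degen c f := exists u, ~ central c u /\ forall v, omega c f u v = 0.
Definition indep c f g := forall a b : F,
  (forall u v, a * omega c f u v + b * omega c g u v = 0) -> a = 0 /\ b = 0.
Definition I1 c := exists f, forall u, (forall v, omega c f u v = 0) -> central c u.
Definition I2 c := exists f g h, [/\ degen c f, degen c g, degen c h &
  [/\ indep c f g, indep c f h & indep c g h]].
Definition I3 c := exists f g, [/\ degen c f, degen c g & indep c f g].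
Definition I4 c := exists f, (exists u v, omega c f u v != 0) /\
  forall a b x d, omega c f a b * omega c f x d - omega c f a x * omega c f b d
                  + omega c f a d * omega c f b x = 0.

Lemma iso_sym c1 c2 : lie_isomorphic c1 c2 -> lie_isomorphic c2 c1.
Proof.
case=> A [uA H]; exists (invmx A); split; first by rewrite unitmx_inv.
move=> u v; have := H (u *m invmx A) (v *m invmx A).
rewrite !mulmxKV // => ->; by rewrite mulmxK.
Qed.

Section Transport.
Variables (c1 c2 : structure_constants F n) (A : 'M[F]_n).
Hypothesis uA : A \in unitmx.
Hypothesis HA : forall u v, lie_br c2 (u *m A) (v *m A) = lie_br c1 u v *m A.

Let g f := invmx A *m f.

Lemma omegaT f u v : omega c2 (g f) u v = omega c1 f (u *m invmx A) (v *m invmx A).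
Proof.
rewrite /omega /g -{1}(mulmxKV uA u) -{1}(mulmxKV uA v) HA.
by rewrite mulmxA mulmxK.
Qed.

Lemma centralT u : central c2 u <-> central c1 (u *m invmx A).
Proof.
split=> h v.
  by apply: (can_inj (mulmxK uA)); rewrite -HA mulmxKV // h mul0mx.
rewrite -(mulmxKV uA u) -(mulmxKV uA v) HA.
by rewrite (h (v *m invmx A)) mul0mx.
Qed.

Lemma I1T : I1 c1 -> I1 c2.
Proof.
case=> f Hf; exists (g f) => u Hu; apply/centralT; apply: Hf => v.
by rewrite -(Hu (v *m A)) omegaT mulmxK.
Qed.

Lemma degenT f : degen c1 f -> degen c2 (g f).
Proof.
case=> u [nc Hu]; exists (u *m A); split.
  by rewrite centralT mulmxK.
by move=> v; rewrite omegaT mulmxK.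
Qed.

Lemma indepT f h : indep c1 f h -> indep c2 (g f) (g h).
Proof.
move=> Hi a b Hab; apply: Hi => u v.
by have := Hab (u *m A) (v *m A); rewrite !omegaT !mulmxK.
Qed.

Lemma I2T : I2 c1 -> I2 c2.
Proof.
case=> f [h [k [d1 d2 d3 [i1 i2 i3]]]]; exists (g f), (g h), (g k).
by split; [apply: degenT..|split; apply: indepT].
Qed.

Lemma I3T : I3 c1 -> I3 c2.
Proof.
case=> f [h [d1 d2 i1]]; exists (g f), (g h).
by split; apply: degenT || apply: indepT.
Qed.

Lemma I4T : I4 c1 -> I4 c2.
Proof.
case=> f [[u [v nz]] P]; exists (g f); split.
  by exists (u *m A), (v *m A); rewrite omegaT !mulmxK.
by move=> a b x d; rewrite !omegaT.
Qed.
End Transport.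

Lemma distinct (P : structure_constants F n -> Prop) c1 c2 :
  (forall c1 c2, lie_isomorphic c1 c2 -> P c1 -> P c2) ->
  P c1 -> ~ P c2 -> ~ lie_isomorphic c1 c2 /\ ~ lie_isomorphic c2 c1.
Proof.
move=> T p1 np2; split; move=> iso; apply: np2.
  exact: T _ _ iso p1.
exact: T _ _ (iso_sym iso) p1.
Qed.

Lemma I1T' c1 c2 : lie_isomorphic c1 c2 -> I1 c1 -> I1 c2.
Proof. by case=> A [uA H]; exact: (I1T uA H). Qed.
Lemma I2T' c1 c2 : lie_isomorphic c1 c2 -> I2 c1 -> I2 c2.
Proof. by case=> A [uA H]; exact: (I2T uA H). Qed.
Lemma I3T' c1 c2 : lie_isomorphic c1 c2 -> I3 c1 -> I3 c2.
Proof. by case=> A [uA H]; exact: (I3T uA H). Qed.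
Lemma I4T' c1 c2 : lie_isomorphic c1 c2 -> I4 c1 -> I4 c2.
Proof. by case=> A [uA H]; exact: (I4T uA H). Qed.
End Inv.

Section Conc.
Variable F : fieldType.

Lemma omega_list n (l : seq (nat * nat * 'rV[F]_n.+1)) f u v : bnd l ->
  omega (sc_of_list l) f u v = \sum_(t <- l)
   (u 0 (inord t.1.1) * v 0 (inord t.1.2) - u 0 (inord t.1.2) * v 0 (inord t.1.1))
     * (t.2 *m f) 0 0.
Proof.
move=> hl; rewrite /omega lie_br_list // mulmx_suml summxE.
by apply: eq_bigr => t _; rewrite -scalemxAl mxE.
Qed.

Lemma bvec_mul n k (f : 'cV[F]_n.+1) : (k < n.+1)%N -> (bvec F n.+1 k *m f) 0 0 = f (inord k) 0.
Proof.
move=> hk; rewrite mxE -(sum_delta (fun j => f j 0) hk).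
by apply: eq_bigr => j _; rewrite mxE eq_sym.
Qed.

Lemma addE (A B : 'M[F]_(1,1)) : (A + B) 0 0 = A 0 0 + B 0 0.
Proof. by rewrite mxE. Qed.

Lemma bvecE n k j : (j < n.+1)%N -> bvec F n.+1 k 0 (inord j) = (j == k)%:R.
Proof. by move=> hj; rewrite mxE inordK. Qed.

Local Notation U u k := (u 0 (@inord 7 k)).
Local Notation L f := (f (@inord 7 6) 0).
Local Notation M f := (f (@inord 7 7) 0).

Lemma omegaN1 (f : 'cV[F]_8) (u v : 'rV[F]_8) : omega (N82 F 1) f u v =
  (U u 0 * U v 1 - U u 1 * U v 0) * L f + (U u 2 * U v 3 - U u 3 * U v 2) * M f
  + (U u 4 * U v 5 - U u 5 * U v 4) * (L f + M f).
Proof.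
rewrite /= /N82_1 omega_list // !big_cons big_nil /= /yv mulmxDl addE !bvec_mul //.
rewrite -[(1+5)%N]/6%N -[(2+5)%N]/7%N; ring.
Qed.

Lemma yv1 (f : 'cV[F]_8) : (yv F 1 *m f) 0 0 = L f. Proof. by rewrite bvec_mul. Qed.
Lemma yv2 (f : 'cV[F]_8) : (yv F 2 *m f) 0 0 = M f. Proof. by rewrite bvec_mul. Qed.

Ltac omN f := rewrite /= /N82_1 /N82_2 /N82_3 /N82_4 /N82_5 omega_list // !big_cons big_nil /= ?(yv1 f) ?(yv2 f); ring.

Lemma omegaN2 (f : 'cV[F]_8) (u v : 'rV[F]_8) : omega (N82 F 2) f u v =
  (U u 4 * U v 1 - U u 1 * U v 4) * L f + (U u 5 * U v 0 - U u 0 * U v 5) * L f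
  + (U u 4 * U v 2 - U u 2 * U v 4) * M f + (U u 5 * U v 3 - U u 3 * U v 5) * M f.
Proof. omN f. Qed.
Lemma omegaN3 (f : 'cV[F]_8) (u v : 'rV[F]_8) : omega (N82 F 3) f u v =
  (U u 0 * U v 1 - U u 1 * U v 0) * L f + (U u 5 * U v 4 - U u 4 * U v 5) * L f
  + (U u 2 * U v 5 - U u 5 * U v 2) * M f + (U u 4 * U v 3 - U u 3 * U v 4) * M f.
Proof. omN f. Qed.
Lemma omegaN4 (f : 'cV[F]_8) (u v : 'rV[F]_8) : omega (N82 F 4) f u v =
  (U u 0 * U v 1 - U u 1 * U v 0) * L f + (U u 2 * U v 5 - U u 5 * U v 2) * L f
  + (U u 4 * U v 3 - U u 3 * U v 4) * L f + (U u 5 * U v 4 - U u 4 * U v 5) * M f.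
Proof. omN f. Qed.
Lemma omegaN5 (f : 'cV[F]_8) (u v : 'rV[F]_8) : omega (N82 F 5) f u v =
  (U u 0 * U v 5 - U u 5 * U v 0) * L f + (U u 2 * U v 3 - U u 3 * U v 2) * L f
  + (U u 4 * U v 1 - U u 1 * U v 4) * L f + (U u 5 * U v 2 - U u 2 * U v 5) * M f
  + (U u 3 * U v 4 - U u 4 * U v 3) * M f.
Proof. omN f. Qed.

Lemma central_list n (l : seq (nat * nat * 'rV[F]_n.+1)) (u : 'rV[F]_n.+1) : bnd l ->
  all (fun t => (t.1.1 < 6) && (t.1.2 < 6))%N l ->
  (forall k, (k < 6)%N -> u 0 (inord k) = 0) -> central (sc_of_list l) u.
Proof.
move=> hl h6 hu v; rewrite lie_br_list //; apply: big1_seq => t /andP [_ ht].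
by have /andP[a b] := allP h6 t ht; rewrite !hu // !mul0r subrr scale0r.
Qed.

Lemma centralN k (u : 'rV[F]_8) : (forall k, (k < 6)%N -> u 0 (inord k) = 0) -> central (N82 F k) u.
Proof.
move=> hu; case: k => [|[|[|[|[|k]]]]] /=; apply: central_list => //.
Qed.

Lemma nc_of c (f : 'cV[F]_8) (u v : 'rV[F]_8) : omega c f u v != 0 -> ~ central c u.
Proof. by move=> nz hc; move: nz; rewrite /omega hc mul0mx mxE eqxx. Qed.

Definition fcol (a b : F) : 'cV[F]_8 :=
  \col_(i < 8) (if (i == 6 :> nat) then a else if (i == 7 :> nat) then b else 0).
Lemma fcolL a b : L (fcol a b) = a. Proof. by rewrite mxE inordK. Qed.
Lemma fcolM a b : M (fcol a b) = b. Proof. by rewrite mxE inordK. Qed.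

Lemma solve0 (x c e : F) : e = 0 -> e = x * c -> c != 0 -> x = 0.
Proof. move=> -> /esym/eqP; rewrite mulf_eq0 => /orP [/eqP -> //| /eqP ->]; by rewrite eqxx. Qed.


Lemma neq0R (e x : F) : e = x -> x != 0 -> e != 0.
Proof. by move=> ->. Qed.

Definition rowv (s : seq F) : 'rV[F]_8 := \row_(j < 8) s`_j.
Lemma rowvE s k : (k < 8)%N -> U (rowv s) k = s`_k.
Proof. by move=> hk; rewrite mxE inordK. Qed.

Ltac om := rewrite ?omegaN1 ?omegaN2 ?omegaN3 ?omegaN4 ?omegaN5 ?fcolL ?fcolM
   ?bvecE ?rowvE //=.
Ltac nzt := rewrite ?oppr_eq0 ?oner_eq0 //; try (apply/eqP; assumption).
Tactic Notation "solv" uconstr(cc) constr(h) := eapply (solve0 (c:=cc) h); [ring | nzt].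
Tactic Notation "ncw" uconstr(ff) uconstr(vv) := eapply (nc_of (f:=ff) (v:=vv)); om.
Tactic Notation "nz1" uconstr(xx) := eapply (neq0R (x:=xx)); [ring | nzt].

Lemma I1_N1 : (2%:R : F) != 0 -> I1 (N82 F 1).
Proof.
move=> two; exists (fcol 1 1) => u Hu; apply: centralN.
have := Hu (bvec F 8 1); om => h; have e0 : U u 0 = 0 by solv 1 h.
have := Hu (bvec F 8 0); om => h'; have e1 : U u 1 = 0 by solv (-1) h'.
have := Hu (bvec F 8 3); om => h2; have e2 : U u 2 = 0 by solv 1 h2.
have := Hu (bvec F 8 2); om => h3; have e3 : U u 3 = 0 by solv (-1) h3.
have := Hu (bvec F 8 5); om => h4; have e4 : U u 4 = 0 by solv (2%:R) h4.
have := Hu (bvec F 8 4); om => h5; have e5 : U u 5 = 0 by solv (- 2%:R) h5.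
by case=> [|[|[|[|[|[|]]]]]].
Qed.

Lemma I2_N1 : I2 (N82 F 1).
Proof.
exists (fcol 0 1), (fcol 1 0), (fcol 1 (-1)); split; [| | | split].
- exists (bvec F 8 0); split; last by move=> v; om; ring.
  by ncw (fcol 1 0) (bvec F 8 1); nz1 (1 : F).
- exists (bvec F 8 2); split; last by move=> v; om; ring.
  by ncw (fcol 0 1) (bvec F 8 3); nz1 (1 : F).
- exists (bvec F 8 4); split; last by move=> v; om; ring.
  by ncw (fcol 1 0) (bvec F 8 5); nz1 (1 : F).
- move=> a b H.
  have := H (bvec F 8 2) (bvec F 8 3); om => h1; have ea : a = 0 by solv 1 h1.
  have := H (bvec F 8 0) (bvec F 8 1); om => h2; have eb : b = 0 by solv 1 h2.
  by [].
- move=> a b H.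
  have := H (bvec F 8 0) (bvec F 8 1); om => h1; have eb : b = 0 by solv 1 h1.
  have := H (bvec F 8 2) (bvec F 8 3); om; rewrite eb => h2; have ea : a = 0 by solv 1 h2.
  by [].
- move=> a b H.
  have := H (bvec F 8 2) (bvec F 8 3); om => h1; have eb : b = 0 by solv (-1) h1.
  have := H (bvec F 8 0) (bvec F 8 1); om; rewrite eb => h2; have ea : a = 0 by solv 1 h2.
  by [].
Qed.


Definition splitP c := forall (f : 'cV[F]_8) u v,
  omega c f u v = L f * omega c (fcol 1 0) u v + M f * omega c (fcol 0 1) u v.

Lemma splitN3 : splitP (N82 F 3).
Proof. by move=> f u v; rewrite !omegaN3 !fcolL !fcolM; ring. Qed.
Lemma splitN4 : splitP (N82 F 4).
Proof. by move=> f u v; rewrite !omegaN4 !fcolL !fcolM; ring. Qed.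
Lemma splitN5 : splitP (N82 F 5).
Proof. by move=> f u v; rewrite !omegaN5 !fcolL !fcolM; ring. Qed.
Lemma indL c f g : splitP c -> indep c f g -> L f = 0 -> L g = 0 -> False.
Proof.
move=> sp hi hf hg.
have [hgm hfm] : M g = 0 /\ - M f = 0.
  by apply: hi => u v; rewrite (sp f) (sp g) hf hg; ring.
have hf' : M f = 0 by move/eqP: hfm; rewrite oppr_eq0 => /eqP.
have [] := hi 1 0 => [u v|]; first by rewrite (sp f) hf hf'; ring.
by move/eqP; rewrite oner_eq0.
Qed.

Lemma indM c f g : splitP c -> indep c f g -> M f = 0 -> M g = 0 -> False.
Proof.
move=> sp hi hf hg.
have [hgm hfm] : L g = 0 /\ - L f = 0.
  by apply: hi => u v; rewrite (sp f) (sp g) hf hg; ring.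
have hf' : L f = 0 by move/eqP: hfm; rewrite oppr_eq0 => /eqP.
have [] := hi 1 0 => [u v|]; first by rewrite (sp f) hf hf'; ring.
by move/eqP; rewrite oner_eq0.
Qed.
Lemma nI1_N2 : ~ I1 (N82 F 2).
Proof.
case=> f Hf.
case: (L f =P 0) => hl; case: (M f =P 0) => hm.
- have hc : central (N82 F 2) (bvec F 8 0) by apply: Hf => v; om; rewrite hl hm; ring.
  by move: hc; ncw (fcol 1 0) (bvec F 8 5); nz1 (-1).
- have hc : central (N82 F 2) (rowv [:: M f; M f; - L f; - L f]) by apply: Hf => v; om; ring.
  by move: hc; ncw (fcol 1 0) (bvec F 8 4); nz1 (- M f).
- have hc : central (N82 F 2) (rowv [:: M f; M f; - L f; - L f]) by apply: Hf => v; om; ring.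
  by move: hc; ncw (fcol 0 1) (bvec F 8 4); nz1 (L f).
- have hc : central (N82 F 2) (rowv [:: M f; M f; - L f; - L f]) by apply: Hf => v; om; ring.
  by move: hc; ncw (fcol 0 1) (bvec F 8 4); nz1 (L f).
Qed.


Lemma I2_N2 : I2 (N82 F 2).
Proof.
exists (fcol 1 0), (fcol 0 1), (fcol 1 1); split; [| | | split].
- exists (rowv [:: 0; 0; -1; -1]); split; last by move=> v; om; ring.
  by ncw (fcol 0 1) (bvec F 8 4); nz1 (1 : F).
- exists (rowv [:: 1; 1; 0; 0]); split; last by move=> v; om; ring.
  by ncw (fcol 1 0) (bvec F 8 4); nz1 (-1 : F).
- exists (rowv [:: 1; 1; -1; -1]); split; last by move=> v; om; ring.
  by ncw (fcol 0 1) (bvec F 8 4); nz1 (1 : F).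
- move=> a b H.
  have := H (bvec F 8 4) (bvec F 8 1); om => h1; have ea : a = 0 by solv 1 h1.
  have := H (bvec F 8 4) (bvec F 8 2); om => h2; have eb : b = 0 by solv 1 h2.
  by [].
- move=> a b H.
  have := H (bvec F 8 4) (bvec F 8 2); om => h1; have eb : b = 0 by solv 1 h1.
  have := H (bvec F 8 4) (bvec F 8 1); om; rewrite eb => h2; have ea : a = 0 by solv 1 h2.
  by [].
- move=> a b H.
  have := H (bvec F 8 4) (bvec F 8 1); om => h1; have eb : b = 0 by solv 1 h1.
  have := H (bvec F 8 4) (bvec F 8 2); om; rewrite eb => h2; have ea : a = 0 by solv 1 h2.
  by [].
Qed.

Lemma I3_N3 : I3 (N82 F 3).
Proof.
exists (fcol 0 1), (fcol 1 0); split.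
- exists (bvec F 8 0); split; last by move=> v; om; ring.
  by ncw (fcol 1 0) (bvec F 8 1); nz1 (1 : F).
- exists (bvec F 8 2); split; last by move=> v; om; ring.
  by ncw (fcol 0 1) (bvec F 8 5); nz1 (1 : F).
- move=> a b H.
  have := H (bvec F 8 0) (bvec F 8 1); om => h1; have eb : b = 0 by solv 1 h1.
  have := H (bvec F 8 2) (bvec F 8 5); om => h2; have ea : a = 0 by solv 1 h2.
  by [].
Qed.

Lemma degN3 f : degen (N82 F 3) f -> L f = 0 \/ M f = 0.
Proof.
case=> u [nc Hu].
case: (L f =P 0) => hl; first by left.
case: (M f =P 0) => hm; first by right.
exfalso; apply: nc; apply: centralN.
have := Hu (bvec F 8 1); om => h0; have e0 : U u 0 = 0 by solv (L f) h0.
have := Hu (bvec F 8 0); om => h1; have e1 : U u 1 = 0 by solv (- L f) h1.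
have := Hu (bvec F 8 2); om => h5; have e5 : U u 5 = 0 by solv (- M f) h5.
have := Hu (bvec F 8 3); om => h4; have e4 : U u 4 = 0 by solv (M f) h4.
have := Hu (bvec F 8 4); om; rewrite e5 => h3; have e3 : U u 3 = 0 by solv (- M f) h3.
have := Hu (bvec F 8 5); om; rewrite e4 => h2; have e2 : U u 2 = 0 by solv (M f) h2.
by case=> [|[|[|[|[|[|]]]]]].
Qed.

Lemma nI2_N3 : ~ I2 (N82 F 3).
Proof.
case=> f [g [h [df dg dh [ifg ifh igh]]]].
have sp := splitN3.
case: (degN3 df) => hf; case: (degN3 dg) => hg; case: (degN3 dh) => hh;
  first [ exact: (indL sp ifg hf hg) | exact: (indM sp ifg hf hg)
        | exact: (indL sp ifh hf hh) | exact: (indM sp ifh hf hh)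
        | exact: (indL sp igh hg hh) | exact: (indM sp igh hg hh) ].
Qed.

Lemma degN4 f : degen (N82 F 4) f -> L f = 0.
Proof.
case=> u [nc Hu].
case: (L f =P 0) => hl; first by [].
exfalso; apply: nc; apply: centralN.
have := Hu (bvec F 8 1); om => h0; have e0 : U u 0 = 0 by solv (L f) h0.
have := Hu (bvec F 8 0); om => h1; have e1 : U u 1 = 0 by solv (- L f) h1.
have := Hu (bvec F 8 2); om => h5; have e5 : U u 5 = 0 by solv (- L f) h5.
have := Hu (bvec F 8 3); om => h4; have e4 : U u 4 = 0 by solv (L f) h4.
have := Hu (bvec F 8 4); om; rewrite e5 => h3; have e3 : U u 3 = 0 by solv (- L f) h3.
have := Hu (bvec F 8 5); om; rewrite e4 => h2; have e2 : U u 2 = 0 by solv (L f) h2.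
by case=> [|[|[|[|[|[|]]]]]].
Qed.

Lemma nI3_N4 : ~ I3 (N82 F 4).
Proof.
case=> f [g [df dg ifg]].
exact: (indL splitN4 ifg (degN4 df) (degN4 dg)).
Qed.

Lemma I4_N4 : I4 (N82 F 4).
Proof.
exists (fcol 0 1); split.
  exists (bvec F 8 5), (bvec F 8 4); om; nz1 (1 : F).
by move=> a b x d; om; ring.
Qed.

Lemma degN5 f : degen (N82 F 5) f -> L f = 0.
Proof.
case=> u [nc Hu].
case: (L f =P 0) => hl; first by [].
exfalso; apply: nc; apply: centralN.
have := Hu (bvec F 8 0); om => h5; have e5 : U u 5 = 0 by solv (- L f) h5.
have := Hu (bvec F 8 1); om => h4; have e4 : U u 4 = 0 by solv (L f) h4.
have := Hu (bvec F 8 2); om; rewrite e5 => h3; have e3 : U u 3 = 0 by solv (- L f) h3.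
have := Hu (bvec F 8 3); om; rewrite e4 => h2; have e2 : U u 2 = 0 by solv (L f) h2.
have := Hu (bvec F 8 4); om; rewrite e3 => h1; have e1 : U u 1 = 0 by solv (- L f) h1.
have := Hu (bvec F 8 5); om; rewrite e2 => h0; have e0 : U u 0 = 0 by solv (L f) h0.
by case=> [|[|[|[|[|[|]]]]]].
Qed.

Lemma nI3_N5 : ~ I3 (N82 F 5).
Proof.
case=> f [g [df dg ifg]].
exact: (indL splitN5 ifg (degN5 df) (degN5 dg)).
Qed.

Lemma nI4_N5 : ~ I4 (N82 F 5).
Proof.
case=> f [[u [v nz]] P].
case: (L f =P 0) => hl; last first.
  have := P (bvec F 8 0) (bvec F 8 5) (bvec F 8 2) (bvec F 8 3); om => h.
  by apply: (hl); solv (L f) h.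
case: (M f =P 0) => hm; last first.
  have := P (bvec F 8 5) (bvec F 8 2) (bvec F 8 3) (bvec F 8 4); om => h.
  by apply: (hm); solv (M f) h.
by move: nz; rewrite omegaN5 hl hm !mulr0 !addr0 eqxx.
Qed.

End Conc.

Lemma I2_I3 (F : fieldType) (c : structure_constants F 8) : I2 c -> I3 c.
Proof. by case=> f [g [h [df dg _ [ifg _ _]]]]; exists f, g. Qed.

Theorem theorem2 (R : realType) (i j : nat) :
  (1 <= i <= 5)%N -> (1 <= j <= 5)%N -> i <> j ->
  ~ lie_isomorphic (N82 (R[i])%C i) (N82 (R[i])%C j).
Proof.
have two : (2%:R : R[i]%C) != 0 by rewrite pnatr_eq0.
have T1 := @I1T' R[i]%C 8; have T2 := @I2T' R[i]%C 8.
have T3 := @I3T' R[i]%C 8; have T4 := @I4T' R[i]%C 8.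
have n24 : ~ I2 (N82 R[i]%C 4) by move/I2_I3; apply: nI3_N4.
have n25 : ~ I2 (N82 R[i]%C 5) by move/I2_I3; apply: nI3_N5.
have d12 := distinct T1 (I1_N1 two) (@nI1_N2 R[i]%C).
have d13 := distinct T2 (@I2_N1 R[i]%C) (@nI2_N3 R[i]%C).
have d14 := distinct T2 (@I2_N1 R[i]%C) n24.
have d15 := distinct T2 (@I2_N1 R[i]%C) n25.
have d23 := distinct T2 (@I2_N2 R[i]%C) (@nI2_N3 R[i]%C).
have d24 := distinct T2 (@I2_N2 R[i]%C) n24.
have d25 := distinct T2 (@I2_N2 R[i]%C) n25.
have d34 := distinct T3 (@I3_N3 R[i]%C) (@nI3_N4 R[i]%C).
have d35 := distinct T3 (@I3_N3 R[i]%C) (@nI3_N5 R[i]%C).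
have d45 := distinct T4 (@I4_N4 R[i]%C) (@nI4_N5 R[i]%C).
case: i => [|[|[|[|[|[|i]]]]]] // _; case: j => [|[|[|[|[|[|j]]]]]] // _ ne;
  try (by case: ne);
  match goal with
  | |- ~ lie_isomorphic (N82 _ 1) (N82 _ 2) => exact (proj1 d12)
  | |- ~ lie_isomorphic (N82 _ 2) (N82 _ 1) => exact (proj2 d12)
  | |- ~ lie_isomorphic (N82 _ 1) (N82 _ 3) => exact (proj1 d13)
  | |- ~ lie_isomorphic (N82 _ 3) (N82 _ 1) => exact (proj2 d13)
  | |- ~ lie_isomorphic (N82 _ 1) (N82 _ 4) => exact (proj1 d14)
  | |- ~ lie_isomorphic (N82 _ 4) (N82 _ 1) => exact (proj2 d14)
  | |- ~ lie_isomorphic (N82 _ 1) (N82 _ 5) => exact (proj1 d15)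
  | |- ~ lie_isomorphic (N82 _ 5) (N82 _ 1) => exact (proj2 d15)
  | |- ~ lie_isomorphic (N82 _ 2) (N82 _ 3) => exact (proj1 d23)
  | |- ~ lie_isomorphic (N82 _ 3) (N82 _ 2) => exact (proj2 d23)
  | |- ~ lie_isomorphic (N82 _ 2) (N82 _ 4) => exact (proj1 d24)
  | |- ~ lie_isomorphic (N82 _ 4) (N82 _ 2) => exact (proj2 d24)
  | |- ~ lie_isomorphic (N82 _ 2) (N82 _ 5) => exact (proj1 d25)
  | |- ~ lie_isomorphic (N82 _ 5) (N82 _ 2) => exact (proj2 d25)
  | |- ~ lie_isomorphic (N82 _ 3) (N82 _ 4) => exact (proj1 d34)
  | |- ~ lie_isomorphic (N82 _ 4) (N82 _ 3) => exact (proj2 d34)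
  | |- ~ lie_isomorphic (N82 _ 3) (N82 _ 5) => exact (proj1 d35)
  | |- ~ lie_isomorphic (N82 _ 5) (N82 _ 3) => exact (proj2 d35)
  | |- ~ lie_isomorphic (N82 _ 4) (N82 _ 5) => exact (proj1 d45)
  | |- ~ lie_isomorphic (N82 _ 5) (N82 _ 4) => exact (proj2 d45)
  end.
Qed.
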